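(* A subgrid tensor $\tau$ whose deviatoric part has the form $$\tau^d = \alpha_1^0 S + \frac{\alpha_2^0}{|S|}(S^2)^d + \frac{\alpha_3^0}{|S|}(\Omega^2)^d + \frac{\alpha_4^0}{|S|^2}(\Omega S\Omega)^d + \frac{\alpha_5^0}{|S|}[S,\Omega] + \frac{\alpha_6^0}{|S|^2}[S^2,\Omega] + \frac{\alpha_7^0}{|S|^3}[\Omega S\Omega,\Omega],$$ where $|S|=\sqrt{\operatorname{tr}(S^2)}$ and $\alpha_1^0,\dots,\alpha_7^0$ are arbitrary scalar functions of $$v_1=\frac{\operatorname{tr}(S^3)}{|S|^3},\quad v_2=\frac{\operatorname{tr}(S^2\Omega^2)}{|S|^4},\quad v_3=\frac{\operatorname{tr}(\Omega^2)}{|S|^2},\quad v_4=\frac{\operatorname{tr}(S\Omega^2)}{|S|^3},\quad v_5=\frac{\operatorname{tr}(S^2\Omega^2S\Omega)}{|S|^6},$$ is invariant under the symmetry groups $G_t$, $Gal$, $SO(3)$, $G_p$ and $G_s$ of the Navier–Stokes equations.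
   Context: Consider the filtered incompressible Navier–Stokes equations on $\mathbb R^3$: $\partial_t u + \nabla\cdot(u\otimes u) + \frac1\rho \nabla p - 2\nu\,\nabla\cdot S + \nabla\cdot\tau = 0$, $\nabla\cdot u=0$, where $u(t,x)\in\mathbb R^3$ is the filtered velocity, $p$ the filtered pressure, $\nu>0$ the kinematic viscosity, $\rho>0$ the density, $S=\frac12(\nabla u+\nabla u^T)$ the (filtered) strain-rate tensor, $\Omega=\frac12(\nabla u-\nabla u^T)$ the (filtered) vorticity tensor, and $\tau$ the subgrid tensor, which is modelled as a tensor-valued function of $(S,\Omega)$. The following groups act on $(t,x,u,p)$: time translations $G_t$: $(t,x,u,p)\mapsto(t+\epsilon,x,u,p)$, $\epsilon\in\mathbb R$; the generalized Galilean group $Gal$: $(t,x,u,p)\mapsto(t,x+\alpha(t),u+\dot\alpha(t),p-\rho\,\ddot\alpha(t)\cdot x)$, $\alpha\in C^2(\mathbb R,\mathbb R^3)$; rotations $SO(3)$: $(t,x,u,p)\mapsto(t,Rx,Ru,p)$, $RR^T=I$, $\det R=1$; pressure translations $G_p$: $(t,x,u,p)\mapsto(t,x,u,p+\xi(t))$, $\xi\in C^0(\mathbb R,\mathbb R)$; scalings $G_s$: $(t,x,u,p)\mapsto(e^{2\epsilon}t,e^{\epsilon}x,e^{-\epsilon}u,e^{-2\epsilon}p)$, $\epsilon\in\mathbb R$. A model $\tau$ is called invariant under such a group $G$ if every element of $G$, acting on $(t,x,u,p)$, is a symmetry of the filtered equations with that model (maps solutions to solutions). For a $3\times 3$ matrix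 $Q$, $Q^d=Q-\frac13\operatorname{tr}(Q)\,I$ denotes its deviatoric part, and $[P,Q]=PQ-QP$. *)

(* Defs.v *)
From HB Require Import structures.
From mathcomp Require Import all_boot all_order all_algebra.
From mathcomp Require Import all_classical all_reals all_analysis.
Set Implicit Arguments. Unset Strict Implicit. Unset Printing Implicit Defensive.
Import Order.TTheory GRing.Theory Num.Theory.
Import numFieldNormedType.Exports.
Local Open Scope ring_scope.

Section FilteredNS.
Variable R : realType.

Notation vec := 'cV[R]_3.
Notation mat := 'M[R]_3.

Definition evec (j : 'I_3) : vec := delta_mx j 0.

Definition dotv (a b : vec) : R := \sum_(i < 3) a i 0 * b i 0.

Definition vfield := R -> vec -> vec.
Definition sfield := R -> vec -> R.

Definition gradu (u : vfield) (t : R) (x : vec) : mat :=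
  \matrix_(i < 3, j < 3) 'D_(evec j) (fun y => u t y i 0) x.

Definition Sof (u : vfield) t x : mat := 2^-1 *: (gradu u t x + (gradu u t x)^T).
Definition Omof (u : vfield) t x : mat := 2^-1 *: (gradu u t x - (gradu u t x)^T).

Definition dev (Q : mat) : mat := Q - (\tr Q / 3%:R) *: 1%:M.
Definition comm (P Q : mat) : mat := P *m Q - Q *m P.
Definition normS (S : mat) : R := Num.sqrt (\tr (S *m S)).

(** the subgrid model of the statement; alpha_k are arbitrary scalar functions
   of (v1,...,v5).  Division by 0 follows MathComp's convention x/0 = 0. *)
Definition model (a1 a2 a3 a4 a5 a6 a7 : R -> R -> R -> R -> R -> R)
  (S W : mat) : mat :=
  let n := normS S in
  let v1 := \tr (S *m S *m S) / n ^+ 3 in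
  let v2 := \tr (S *m S *m W *m W) / n ^+ 4 in
  let v3 := \tr (W *m W) / n ^+ 2 in
  let v4 := \tr (S *m W *m W) / n ^+ 3 in
  let v5 := \tr (S *m S *m W *m W *m S *m W) / n ^+ 6 in
  let A k := k v1 v2 v3 v4 v5 in
  A a1 *: S
  + (A a2 / n) *: dev (S *m S)
  + (A a3 / n) *: dev (W *m W)
  + (A a4 / n ^+ 2) *: dev (W *m S *m W)
  + (A a5 / n) *: comm S W
  + (A a6 / n ^+ 2) *: comm (S *m S) W
  + (A a7 / n ^+ 3) *: comm (W *m S *m W) W.

Definition is_solution (nu rho : R) (tau : mat -> mat -> mat)
  (u : vfield) (p : sfield) : Prop :=
  (forall t x, differentiable (fun z : R * vec => u z.1 z.2) (t, x)) /\
  (forall t x (i j : 'I_3), differentiable (fun y => gradu u t y i j) x) /\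
  (forall t x, differentiable (p t) x) /\
  (forall t x (i j : 'I_3),
     differentiable (fun y => tau (Sof u t y) (Omof u t y) i j) x) /\
  (forall t x, \tr (gradu u t x) = 0) /\
  (forall t x (i : 'I_3),
     'D_1 (fun s => u s x i 0) t
     + \sum_(j < 3) 'D_(evec j) (fun y => u t y i 0 * u t y j 0) x
     + rho^-1 * 'D_(evec i) (p t) x
     - 2%:R * nu * \sum_(j < 3) 'D_(evec j) (fun y => Sof u t y i j) x
     + \sum_(j < 3) 'D_(evec j) (fun y => tau (Sof u t y) (Omof u t y) i j) x
     = 0).

Definition act_time (eps : R) (u : vfield) (p : sfield) : vfield * sfield :=
  (fun t x => u (t - eps) x, fun t x => p (t - eps) x).

(* generalized Galilean: (t,x,u,p) |-> (t, x+alpha t, u + alpha', p - rho alpha''.x) *)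
Definition act_gal (rho : R) (alpha : R -> vec) (u : vfield) (p : sfield)
  : vfield * sfield :=
  (fun t x => u t (x - alpha t) + (derive1 alpha) t,
   fun t x => p t (x - alpha t) - rho * dotv ((derive1 (derive1 alpha)) t) (x - alpha t)).

Definition act_rot (Q : mat) (u : vfield) (p : sfield) : vfield * sfield :=
  (fun t x => Q *m u t (Q^T *m x), fun t x => p t (Q^T *m x)).

Definition act_press (xi : R -> R) (u : vfield) (p : sfield) : vfield * sfield :=
  (u, fun t x => p t x + xi t).

(* scalings: (t,x,u,p) |-> (e^{2eps}t, e^eps x, e^{-eps} u, e^{-2eps} p) *)
Definition act_scal (eps : R) (u : vfield) (p : sfield) : vfield * sfield :=
  (fun t x => expR (- eps) *: u (expR (- (2%:R * eps)) * t) (expR (- eps) *: x),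
   fun t x => expR (- (2%:R * eps)) * p (expR (- (2%:R * eps)) * t) (expR (- eps) *: x)).

Definition C2 (alpha : R -> vec) : Prop :=
  (forall t, derivable alpha t 1) /\ (forall t, derivable (derive1 alpha) t 1) /\
  continuous (derive1 (derive1 alpha)).

Definition preserves nu rho tau (g : vfield -> sfield -> vfield * sfield) : Prop :=
  forall u p, is_solution nu rho tau u p ->
    is_solution nu rho tau (g u p).1 (g u p).2.

Definition invariant_Gt nu rho tau : Prop :=
  forall eps : R, preserves nu rho tau (act_time eps).
Definition invariant_Gal nu rho tau : Prop :=
  forall alpha : R -> vec, C2 alpha -> preserves nu rho tau (act_gal rho alpha).
Definition invariant_SO3 nu rho tau : Prop :=
  forall Q : mat, Q *m Q^T = 1%:M -> \det Q = 1 -> preserves nu rho tau (act_rot Q).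
Definition invariant_Gp nu rho tau : Prop :=
  forall xi : R -> R, continuous xi -> preserves nu rho tau (act_press xi).
Definition invariant_Gs nu rho tau : Prop :=
  forall eps : R, preserves nu rho tau (act_scal eps).

End FilteredNS.

(* Main.v *)
Require Import Defs.
From HB Require Import structures.
From mathcomp Require Import all_boot all_order all_algebra.
From mathcomp Require Import all_classical all_reals all_analysis.
From mathcomp Require Import ring.
Import Order.TTheory GRing.Theory Num.Theory.
Import numFieldNormedType.Exports.
Local Open Scope ring_scope.
Set Implicit Arguments. Unset Strict Implicit. Unset Printing Implicit Defensive.

Section S.
Variable R : realType.
Notation vec := 'cV[R]_3.
Notation mat := 'M[R]_3.

Lemma derive_aff (U V W : normedModType R) (f : V -> W) (g : U -> V) x v y w :
  (forall h : R, g (h *: v + x) = h *: w + y) ->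
  'D_v (fun z => f (g z)) x = 'D_w f y.
Proof.
move=> H; have Hx : g x = y by have := H 0; rewrite !scale0r !add0r.
rewrite /derive.
suff -> : (fun h : R => h^-1 *: (((fun z => f (g z)) \o shift x) (h *: v) - f (g x)))
  = (fun h => h^-1 *: ((f \o shift y) (h *: w) - f y)) by [].
by apply: funext => h /=; rewrite H Hx.
Qed.

Lemma derive_addc (V W : normedModType R) (f : V -> W) (c : W) x v :
  'D_v (fun z => f z + c) x = 'D_v f x.
Proof.
rewrite /derive.
suff -> : (fun h : R => h^-1 *: (((fun z => f z + c) \o shift x) (h *: v) - (f x + c)))
  = (fun h => h^-1 *: ((f \o shift x) (h *: v) - f x)) by [].
by apply: funext => h /=; rewrite opprD addrACA subrr addr0.
Qed.

Lemma derive_lincomb (V : normedModType R) n (c : 'I_n -> R) (f : 'I_n -> V -> R) x v :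
  (forall k, differentiable (f k) x) ->
  'D_v (fun y => \sum_k c k * f k y) x = \sum_k c k * 'D_v (f k) x.
Proof.
move=> Hf.
have -> : (fun y => \sum_k c k * f k y) = \sum_k (fun y => c k * f k y).
  by apply: funext => y; rewrite fct_sumE.
rewrite derive_sum; last by move=> k; apply: diff_derivable; apply: differentiableM => //.
apply: eq_bigr => k _.
have -> : (fun y => c k * f k y) = c k \*o f k by [].
by rewrite deriveMl //; apply: diff_derivable.
Qed.

Lemma vec_expand (w : vec) : w = \sum_j w j 0 *: evec R j.
Proof.
rewrite {1}(matrix_sum_delta w); apply: eq_bigr => j _.
by rewrite big_ord1 /evec; congr (_ *: delta_mx _ _); apply/val_inj; case: (ord1 _) => //; rewrite ord1.
Qed.

Lemma derive_expand (f : vec -> R) x w : differentiable f x ->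
  'D_w f x = \sum_j w j 0 * 'D_(evec R j) f x.
Proof.
move=> df; rewrite deriveE // {1}(vec_expand w) linear_sum; apply: eq_bigr => j _.
by rewrite linearZ deriveE.
Qed.

Lemma pairZD (h a c : R) (b d : vec) : h *: ((a, b) : R * vec) + (c, d) = (h *: a + c, h *: b + d).
Proof. by []. Qed.

Lemma derive_t (W : normedModType R) (F : R * vec -> W) t y :
  'D_1 (fun s => F (s, y)) t = 'D_((1 : R, 0 : vec)) F (t, y).
Proof.
apply: (@derive_aff _ _ _ F (fun s : R => (s, y))) => h.
by rewrite pairZD scaler0 add0r.
Qed.

Lemma derive_x (W : normedModType R) (F : R * vec -> W) t y w :
  'D_w (fun y' => F (t, y')) y = 'D_((0 : R, w)) F (t, y).
Proof.
apply: (@derive_aff _ _ _ F (fun y0 : vec => (t, y0))) => h.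
by rewrite pairZD scaler0 add0r.
Qed.


Lemma derive_comp (U V W : normedModType R) (f : V -> W) (g : U -> V) x v :
  differentiable g x -> differentiable f (g x) ->
  'D_v (fun z => f (g z)) x = 'D_('D_v g x) f (g x).
Proof.
move=> dg df.
have -> : (fun z => f (g z)) = f \o g by [].
rewrite deriveE; last exact: differentiable_comp.
by rewrite diff_comp //= deriveE // deriveE.
Qed.

Lemma derive_scal1 (W : normedModType R) (f : R -> W) r c :
  differentiable f r -> 'D_c f r = c *: 'D_1 f r.
Proof.
move=> df; rewrite !deriveE //.
by rewrite -[in LHS](mulr1 c) -[c * 1]/(c *: (1:R)) linearZ.
Qed.

Lemma diff_sumf (V : normedModType R) n (f : 'I_n -> V -> R) x :
  (forall k, differentiable (f k) x) -> differentiable (fun y => \sum_k f k y) x.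
Proof.
move=> Hf.
have -> : (fun y => \sum_k f k y) = \sum_k f k by apply: funext => y; rewrite fct_sumE.
exact: differentiable_sum.
Qed.

Lemma derive_sumf (V : normedModType R) n (f : 'I_n -> V -> R) x v :
  (forall k, differentiable (f k) x) ->
  'D_v (fun y => \sum_k f k y) x = \sum_k 'D_v (f k) x.
Proof.
move=> Hf.
have -> : (fun y => \sum_k f k y) = \sum_k f k by apply: funext => y; rewrite fct_sumE.
by rewrite derive_sum // => k; apply: diff_derivable.
Qed.

Lemma diff_cmul (V : normedModType R) (c : R) (f : V -> R) x :
  differentiable f x -> differentiable (fun y => c * f y) x.
Proof. by move=> df; apply: differentiableM => //; apply: differentiable_cst. Qed.

Lemma derive_cmul (V : normedModType R) (c : R) (f : V -> R) x v :
  differentiable f x -> 'D_v (fun y => c * f y) x = c * 'D_v f x.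
Proof.
move=> df; have -> : (fun y => c * f y) = c \*o f by [].
by rewrite deriveMl //; apply: diff_derivable.
Qed.

Lemma diff_mulf (V : normedModType R) (f g : V -> R) x :
  differentiable f x -> differentiable g x -> differentiable (fun y => f y * g y) x.
Proof. by move=> df dg; apply: differentiableM. Qed.

Lemma derive_mulf (V : normedModType R) (f g : V -> R) x v :
  differentiable f x -> differentiable g x ->
  'D_v (fun y => f y * g y) x = f x * 'D_v g x + g x * 'D_v f x.
Proof.
move=> df dg; have -> : (fun y => f y * g y) = f * g by [].
by rewrite deriveM //; apply: diff_derivable.
Qed.

Lemma diff_mulmx (V : normedModType R) (A : mat) (f : V -> vec) x :
  differentiable f x -> differentiable (fun y => A *m f y) x.
Proof.
move=> df.
have -> : (fun y => A *m f y) = \sum_k (fun y => f y k 0 *: col k A).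
  apply: funext => y; rewrite fct_sumE; apply/matrixP => i j.
  rewrite !mxE summxE; apply: eq_bigr => k _; rewrite !mxE (ord1 j) mulrC.
  by [].
apply: differentiable_sum => k; apply: differentiableZl.
exact: (differentiable_comp df (differentiable_coord _ k 0)).
Qed.

Lemma diff_fst (z : R * vec) : differentiable (fun p : R * vec => p.1) z.
Proof.
have lin : linear (fun p : R * vec => p.1) by [].
pose fL : {linear (R * vec)%type -> R} := HB.pack (fun p : R * vec => p.1) (GRing.isLinear.Build _ _ _ _ _ lin).
rewrite (_ : (fun p => p.1) = fL) //; apply: linear_differentiable => q; exact: cvg_fst.
Qed.

Lemma diff_snd (z : R * vec) : differentiable (fun p : R * vec => p.2) z.
Proof.
have lin : linear (fun p : R * vec => p.2) by [].
pose fL : {linear (R * vec)%type -> vec} := HB.pack (fun p : R * vec => p.2) (GRing.isLinear.Build _ _ _ _ _ lin).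
rewrite (_ : (fun p => p.2) = fL) //; apply: linear_differentiable => q; exact: cvg_snd.
Qed.

Section Reg.
Variable u : R -> vec -> vec.
Hypothesis H1 : forall t x, differentiable (fun z : R * vec => u z.1 z.2) (t,x).

Lemma diff_ux t x : differentiable (u t) x.
Proof.
have dp : differentiable (fun y : vec => (t, y)) x.
  by apply: differentiable_pair => //; apply: differentiable_cst.
exact: (differentiable_comp dp (H1 t x)).
Qed.

Lemma diff_uxi t x i : differentiable (fun y => u t y i 0) x.
Proof.
exact: (differentiable_comp (diff_ux t x) (differentiable_coord _ i 0)).
Qed.

Lemma diff_ut t x : differentiable (fun s => u s x) t.
Proof.
have dp : differentiable (fun s : R => (s, x)) t.
  by apply: differentiable_pair => //; apply: differentiable_cst.
exact: (differentiable_comp dp (H1 t x)).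
Qed.

Lemma diff_uti t x i : differentiable (fun s => u s x i 0) t.
Proof.
exact: (differentiable_comp (diff_ut t x) (differentiable_coord _ i 0)).
Qed.
End Reg.

Lemma evecE (A : mat) j m : (A *m evec R j) m 0 = A m j.
Proof. by rewrite /evec -colE mxE. Qed.

Lemma diff_id (V : normedModType R) (x : V) : differentiable (fun y : V => y) x.
Proof. exact: ex_diff. Qed.

Section MAct.
Variables (M : mat) (s : R).

Lemma conj_entry (X : mat) i j :
  (M *m X *m M^T) i j = \sum_k M i k * \sum_l M j l * X k l.
Proof.
rewrite mxE; under eq_bigr do rewrite !mxE big_distrl /=.
rewrite exchange_big; apply: eq_bigr => k _; rewrite big_distrr; apply: eq_bigr => l _ /=.
by rewrite -mulrA [X k l * _]mulrC.
Qed.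

Lemma diff_conj_entry (V : normedModType R) (F : V -> mat) x i j :
  (forall k l, differentiable (fun y => F y k l) x) ->
  differentiable (fun y => (M *m F y *m M^T) i j) x.
Proof.
move=> dF; under eq_fun do rewrite conj_entry.
apply: diff_sumf => k; apply: diff_cmul; apply: diff_sumf => l; exact: diff_cmul.
Qed.

Lemma diff_MT (x : vec) : differentiable (fun y : vec => M^T *m y) x.
Proof. exact: (diff_mulmx M^T (diff_id x)). Qed.

Lemma derive_MT (f : vec -> R) x j :
  differentiable f (M^T *m x) ->
  'D_(evec R j) (fun y => f (M^T *m y)) x = \sum_m M j m * 'D_(evec R m) f (M^T *m x).
Proof.
move=> df.
rewrite (@derive_aff _ _ _ f (fun y => M^T *m y) x (evec R j) (M^T *m x) (M^T *m evec R j)); last first.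
  by move=> h; rewrite mulmxDr scalemxAr.
rewrite derive_expand //; apply: eq_bigr => m _; by rewrite evecE mxE.
Qed.

Lemma derive_Mvec (f : vec -> vec) x i j :
  (forall k, differentiable (fun y => f y k 0) (M^T *m x)) ->
  'D_(evec R j) (fun y => (M *m f (M^T *m y)) i 0) x
  = (M *m (\matrix_(k, l) 'D_(evec R l) (fun y => f y k 0) (M^T *m x)) *m M^T) i j.
Proof.
move=> df; under eq_fun do rewrite mxE.
have dfc k : differentiable (fun y => f (M^T *m y) k 0) x.
  exact: (differentiable_comp (diff_MT x) (df k)).
rewrite derive_sumf; last by move=> k; apply: diff_cmul.
rewrite conj_entry; apply: eq_bigr => k _.
rewrite derive_cmul //; congr (_ * _).
rewrite (derive_MT (f := fun z => f z k 0)) //; apply: eq_bigr => l _; by rewrite mxE.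
Qed.

Hypothesis HMM : M^T *m M = s%:M.

Lemma div_conj (F : vec -> mat) x i :
  (forall k l, differentiable (fun y => F y k l) (M^T *m x)) ->
  \sum_j 'D_(evec R j) (fun y => (M *m F (M^T *m y) *m M^T) i j) x
  = s * \sum_k M i k * \sum_m 'D_(evec R m) (fun y => F y k m) (M^T *m x).
Proof.
move=> dF.
have dFc k l : differentiable (fun y => F (M^T *m y) k l) x.
  exact: (differentiable_comp (diff_MT x) (dF k l)).
set D := fun m k l => 'D_(evec R m) (fun y => F y k l) (M^T *m x).
have step1 j : 'D_(evec R j) (fun y => (M *m F (M^T *m y) *m M^T) i j) x
   = \sum_k M i k * \sum_l \sum_m (M j l * M j m) * D m k l.
  under eq_fun do rewrite conj_entry.
  rewrite derive_sumf; last first.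
    by move=> k; apply: diff_cmul; apply: diff_sumf => l; apply: diff_cmul.
  apply: eq_bigr => k _; rewrite derive_cmul; last by apply: diff_sumf => l; apply: diff_cmul.
  congr (_ * _); rewrite derive_sumf; last by move=> l; apply: diff_cmul.
  apply: eq_bigr => l _; rewrite derive_cmul // (derive_MT (f := fun z => F z k l)) //.
  rewrite big_distrr; apply: eq_bigr => m _ /=; by rewrite mulrA.
under eq_bigr do rewrite step1.
rewrite exchange_big big_distrr; apply: eq_bigr => k _ /=.
rewrite -big_distrr mulrCA; congr (_ * _).
rewrite exchange_big big_distrr; apply: eq_bigr => l _ /=.
rewrite exchange_big /=.
have -> : \sum_m \sum_j M j l * M j m * D m k l = \sum_m (s%:M : mat) l m * D m k l.
  apply: eq_bigr => m _; rewrite -big_distrl /= -HMM mxE; congr (_ * _).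
  by apply: eq_bigr => j _; rewrite mxE.
rewrite (bigD1 l) //= big1 ?addr0; first by rewrite mxE eqxx mulr1n.
by move=> m; rewrite mxE eq_sym => /negbTE ->; rewrite mulr0n mul0r.
Qed.

End MAct.
End S.

Section Equiv.
Variable R : realType.
Notation vec := 'cV[R]_3.
Notation mat := 'M[R]_3.
Variables (M : mat) (s : R).
Hypothesis HMM : M^T *m M = s%:M.
Hypothesis HMM' : M *m M^T = s%:M.
Hypothesis hs : 0 < s.

Local Notation C X := (M *m X *m M^T).

Lemma CM (X Y : mat) : C X *m C Y = s *: C (X *m Y).
Proof.
rewrite !mulmxA.
rewrite -[M *m X *m trmx M *m M]mulmxA HMM mul_mx_scalar.
by rewrite -!scalemxAl.
Qed.

Lemma trC (X : mat) : \tr (C X) = s * \tr X.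
Proof. by rewrite mxtrace_mulC mulmxA HMM mul_scalar_mx mxtraceZ. Qed.

Lemma CZ a (X : mat) : C (a *: X) = a *: C X.
Proof. by rewrite -scalemxAr -scalemxAl. Qed.

Lemma CD (X Y : mat) : C (X + Y) = C X + C Y.
Proof. by rewrite mulmxDr mulmxDl. Qed.

Lemma CB (X Y : mat) : C (X - Y) = C X - C Y.
Proof. by rewrite mulmxBr mulmxBl. Qed.

Lemma devZ a (X : mat) : dev (a *: X) = a *: dev X.
Proof. by rewrite /dev mxtraceZ scalerBr scalerA mulrA. Qed.

Lemma devC (X : mat) : dev (C X) = C (dev X).
Proof.
rewrite /dev CB CZ mulmx1 HMM' trC -[s%:M]scalemx1 scalerA; congr (_ - _ *: _).
ring.
Qed.

Lemma commZl a (X Y : mat) : comm (a *: X) Y = a *: comm X Y.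
Proof. by rewrite /comm -scalemxAl -scalemxAr scalerBr. Qed.

Lemma commC (X Y : mat) : comm (C X) (C Y) = s *: C (comm X Y).
Proof. by rewrite /comm !CM CB scalerBr. Qed.

Lemma normC (X : mat) : normS (C X) = s * normS X.
Proof.
rewrite /normS CM mxtraceZ trC mulrA sqrtrM ?mulr_ge0 ?ltW //.
by rewrite -expr2 sqrtr_sqr ger0_norm ?ltW.
Qed.

Ltac redC := repeat (rewrite CM || rewrite -scalemxAl).

Lemma ratio k (x n : R) : s ^+ k * x / (s * n) ^+ k = x / n ^+ k.
Proof.
rewrite exprMn invfM mulrACA mulfV ?mul1r //.
by rewrite expf_neq0 // gt_eqF.
Qed.

Lemma C7 (b1 b2 b3 b4 b5 b6 b7 : R) (X1 X2 X3 X4 X5 X6 X7 : mat) :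
  C (b1 *: X1 + b2 *: X2 + b3 *: X3 + b4 *: X4 + b5 *: X5 + b6 *: X6 + b7 *: X7)
  = b1 *: C X1 + b2 *: C X2 + b3 *: C X3 + b4 *: C X4 + b5 *: C X5 + b6 *: C X6 + b7 *: C X7.
Proof. by rewrite !CD !CZ. Qed.

Lemma sne0 : s != 0. Proof. by rewrite gt_eqF. Qed.

Lemma k1 (a n : R) : a / (s * n) * s = a / n.
Proof. rewrite invfM; set m := n^-1; by field; rewrite sne0. Qed.
Lemma k2 (a n : R) : a / (s * n) ^+ 2 * s * s = a / n ^+ 2.
Proof. rewrite exprMn invfM; set m := (n ^+ 2)^-1; by field; rewrite sne0. Qed.
Lemma k3 (a n : R) : a / (s * n) ^+ 3 * s * s * s = a / n ^+ 3.
Proof. rewrite exprMn invfM; set m := (n ^+ 3)^-1; by field; rewrite sne0. Qed.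

Lemma model_equiv a1 a2 a3 a4 a5 a6 a7 (S W : mat) :
  model a1 a2 a3 a4 a5 a6 a7 (C S) (C W) = C (model a1 a2 a3 a4 a5 a6 a7 S W).
Proof.
rewrite /model /= C7 normC.
have t1 : \tr (C S *m C S *m C S) = s ^+ 3 * \tr (S *m S *m S).
  by redC; rewrite !mxtraceZ trC; ring.
have t2 : \tr (C S *m C S *m C W *m C W) = s ^+ 4 * \tr (S *m S *m W *m W).
  by redC; rewrite !mxtraceZ trC; ring.
have t3 : \tr (C W *m C W) = s ^+ 2 * \tr (W *m W).
  by redC; rewrite !mxtraceZ trC; ring.
have t4 : \tr (C S *m C W *m C W) = s ^+ 3 * \tr (S *m W *m W).
  by redC; rewrite !mxtraceZ trC; ring.
have t5 : \tr (C S *m C S *m C W *m C W *m C S *m C W) = s ^+ 6 * \tr (S *m S *m W *m W *m S *m W).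
  by redC; rewrite !mxtraceZ trC; ring.
rewrite t1 t2 t3 t4 t5 !ratio.
redC.
rewrite !devZ !commZl !devC !commC !scalerA !k1 !k2 !k3.
done.
Qed.
End Equiv.

Section Main.
Variable R : realType.
Notation vec := 'cV[R]_3.
Notation mat := 'M[R]_3.

Lemma diff_addf (V : normedModType R) (f g : V -> R) x :
  differentiable f x -> differentiable g x -> differentiable (fun y => f y + g y) x.
Proof. by move=> df dg; apply: differentiableD. Qed.

Lemma diff_Sof (u : R -> vec -> vec) t x i j :
  (forall i j, differentiable (fun y => gradu u t y i j) x) ->
  differentiable (fun y => Sof u t y i j) x.
Proof.
move=> H2.
have -> : (fun y => Sof u t y i j) = (fun y => 2^-1 * (gradu u t y i j + gradu u t y j i)).
  by apply: funext => y; rewrite /Sof !mxE.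
by apply: diff_cmul; apply: diff_addf.
Qed.

Lemma diff_Omof (u : R -> vec -> vec) t x i j :
  (forall i j, differentiable (fun y => gradu u t y i j) x) ->
  differentiable (fun y => Omof u t y i j) x.
Proof.
move=> H2.
have -> : (fun y => Omof u t y i j) = (fun y => 2^-1 * (gradu u t y i j - gradu u t y j i)).
  by apply: funext => y; rewrite /Omof !mxE.
by apply: diff_cmul; apply: differentiableB.
Qed.

Definition actM (M : mat) (s : R) (u : vfield R) (p : sfield R) : vfield R * sfield R :=
  (fun t x => M *m u (s * t) (M^T *m x), fun t x => s * p (s * t) (M^T *m x)).

Lemma preserves_M nu rho tau (M : mat) (s : R) :
  M^T *m M = s%:M ->
  (forall S W, tau (M *m S *m M^T) (M *m W *m M^T) = M *m tau S W *m M^T) ->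
  preserves nu rho tau (actM M s).
Proof.
move=> HMM Htau u p [H1 [H2 [H3 [H4 [H5 H6]]]]].
rewrite /actM /=.
set u' := fun t x => M *m u (s * t) (M^T *m x).
have gradE t x : gradu u' t x = M *m gradu u (s * t) (M^T *m x) *m M^T.
  apply/matrixP => i j; rewrite [LHS]mxE (derive_Mvec (f := u (s * t))) //.
  by move=> k; apply: diff_uxi.
have SE t x : Sof u' t x = M *m Sof u (s * t) (M^T *m x) *m M^T.
  by rewrite /Sof gradE CZ CD !trmx_mul trmxK !mulmxA.
have OE t x : Omof u' t x = M *m Omof u (s * t) (M^T *m x) *m M^T.
  by rewrite /Omof gradE CZ CB !trmx_mul trmxK !mulmxA.
have tauE t x : tau (Sof u' t x) (Omof u' t x)
    = M *m tau (Sof u (s * t) (M^T *m x)) (Omof u (s * t) (M^T *m x)) *m M^T.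
  by rewrite SE OE Htau.
refine (conj _ (conj _ (conj _ (conj _ (conj _ _))))).
- move=> t x.
  have dL : differentiable (fun z : R * vec => (s * z.1, M^T *m z.2)) (t, x).
    apply: differentiable_pair; first exact: (diff_cmul s (diff_fst _)).
    exact: (diff_mulmx (M^T) (diff_snd _)).
  have dG := differentiable_comp dL (H1 (s * t) (M^T *m x)).
  exact: (diff_mulmx M dG).
- move=> t x i j.
  rewrite (_ : (fun y => gradu u' t y i j) = (fun y => (M *m gradu u (s * t) (M^T *m y) *m M^T) i j)); last first.
    by apply: funext => y; rewrite gradE.
  apply: diff_conj_entry => k l; exact: (differentiable_comp (diff_MT M x) (H2 _ _ k l)).
- move=> t x; apply: diff_cmul; exact: (differentiable_comp (diff_MT M x) (H3 _ _)).
- move=> t x i j.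
  rewrite (_ : (fun y => tau (Sof u' t y) (Omof u' t y) i j) = (fun y => (M *m tau (Sof u (s * t) (M^T *m y)) (Omof u (s * t) (M^T *m y)) *m M^T) i j)); last first.
    by apply: funext => y; rewrite tauE.
  apply: diff_conj_entry => k l; exact: (differentiable_comp (diff_MT M x) (H4 _ _ k l)).
- by move=> t x; rewrite gradE (trC HMM) H5 mulr0.
- move=> t x i.
  set t0 := s * t; set y0 := M^T *m x.
  have ET : 'D_1 (fun r => u' r x i 0) t = s * \sum_k M i k * 'D_1 (fun r => u r y0 k 0) t0.
    rewrite (_ : (fun r => u' r x i 0) = (fun r => \sum_k M i k * u (s * r) y0 k 0)); last first.
      by apply: funext => r; rewrite /u' mxE.
    rewrite (@derive_aff _ _ _ _ (fun r => \sum_k M i k * u r y0 k 0) (fun r => s * r) t 1 t0 s); last first.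
      move=> h; rewrite /t0; change (s * (h * 1 + t) = h * s + s * t); ring.
    rewrite derive_sumf; last by move=> k; apply: diff_cmul; apply: diff_uti.
    rewrite big_distrr; apply: eq_bigr => k _ /=.
    rewrite derive_cmul; last by apply: diff_uti.
    rewrite (derive_scal1 _ (diff_uti H1 _ _ _)).
    by rewrite mulrCA.
  have EC : \sum_j 'D_(evec R j) (fun y => u' t y i 0 * u' t y j 0) x
      = s * \sum_k M i k * \sum_m 'D_(evec R m) (fun y => u t0 y k 0 * u t0 y m 0) y0.
    pose F := fun z : vec => (\matrix_(k, l) (u t0 z k 0 * u t0 z l 0) : mat).
    have FE j : (fun y => u' t y i 0 * u' t y j 0) = (fun y => (M *m F (M^T *m y) *m M^T) i j).
      apply: funext => y; rewrite conj_entry /u' !mxE big_distrl; apply: eq_bigr => k _ /=.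
      rewrite -mulrA; congr (_ * _); rewrite big_distrr; apply: eq_bigr => l _ /=; rewrite /F mxE /t0; ring.

    rewrite (eq_bigr (fun j => 'D_(evec R j) (fun y => (M *m F (M^T *m y) *m M^T) i j) x)); last first.
      by move=> j _; rewrite FE.
    rewrite (div_conj HMM (F := F)); last first.
      move=> k l; rewrite /F.
      rewrite (_ : (fun y => (\matrix_(k0, l0) (u t0 y k0 0 * u t0 y l0 0) : mat) k l) = (fun y => u t0 y k 0 * u t0 y l 0)); last first.
        by apply: funext => y; rewrite mxE.
      by apply: diff_mulf; apply: diff_uxi.
    congr (_ * _); apply: eq_bigr => k _; congr (_ * _); apply: eq_bigr => m _.
    rewrite (_ : (fun y => F y k m) = (fun y => u t0 y k 0 * u t0 y m 0)) //.
    by apply: funext => y; rewrite /F mxE.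
  have EP : 'D_(evec R i) (fun y => s * p t0 (M^T *m y)) x
      = s * \sum_m M i m * 'D_(evec R m) (p t0) y0.
    rewrite derive_cmul; last exact: (differentiable_comp (diff_MT M x) (H3 _ _)).
    by rewrite (derive_MT (f := p t0)).
  have EV : \sum_j 'D_(evec R j) (fun y => Sof u' t y i j) x
      = s * \sum_k M i k * \sum_m 'D_(evec R m) (fun y => Sof u t0 y k m) y0.
    rewrite (eq_bigr (fun j => 'D_(evec R j) (fun y => (M *m Sof u t0 (M^T *m y) *m M^T) i j) x)); last first.
      move=> j _; congr ('D_ _ _ _); by apply: funext => y; rewrite SE.
    by rewrite (div_conj HMM) // => k l; apply: diff_Sof.
  have EX : \sum_j 'D_(evec R j) (fun y => tau (Sof u' t y) (Omof u' t y) i j) x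
      = s * \sum_k M i k * \sum_m 'D_(evec R m) (fun y => tau (Sof u t0 y) (Omof u t0 y) k m) y0.
    rewrite (eq_bigr (fun j => 'D_(evec R j) (fun y => (M *m tau (Sof u t0 (M^T *m y)) (Omof u t0 (M^T *m y)) *m M^T) i j) x)); last first.
      move=> j _; congr ('D_ _ _ _); by apply: funext => y; rewrite tauE.
    by rewrite (div_conj HMM (F := fun y => tau (Sof u t0 y) (Omof u t0 y))).
  rewrite ET EC EP EV EX.
  have Hk : \sum_k M i k * ('D_1 (fun r => u r y0 k 0) t0
        + \sum_j 'D_(evec R j) (fun y => u t0 y k 0 * u t0 y j 0) y0
        + rho^-1 * 'D_(evec R k) (p t0) y0
        - 2%:R * nu * \sum_j 'D_(evec R j) (fun y => Sof u t0 y k j) y0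
        + \sum_j 'D_(evec R j) (fun y => tau (Sof u t0 y) (Omof u t0 y) k j) y0) = 0.
    by apply: big1 => k _; rewrite H6 mulr0.
  rewrite (eq_bigr (fun k => M i k * 'D_1 (fun r => u r y0 k 0) t0
        + M i k * \sum_j 'D_(evec R j) (fun y => u t0 y k 0 * u t0 y j 0) y0
        + rho^-1 * (M i k * 'D_(evec R k) (p t0) y0)
        - 2%:R * nu * (M i k * \sum_j 'D_(evec R j) (fun y => Sof u t0 y k j) y0)
        + M i k * \sum_j 'D_(evec R j) (fun y => tau (Sof u t0 y) (Omof u t0 y) k j) y0)) in Hk; last first.
    by move=> k _; ring.
  rewrite big_split sumrB !big_split /= -!mulr_sumr in Hk.
  rewrite -[RHS](mulr0 s) -[0 in RHS]Hk; ring.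
Qed.

Lemma preserves_ext nu rho tau (g g' : vfield R -> sfield R -> vfield R * sfield R) :
  (forall u p, g u p = g' u p) -> preserves nu rho tau g' -> preserves nu rho tau g.
Proof. by move=> E P u p /P; rewrite E. Qed.

Lemma model_equiv_gen (M : mat) (s : R) a1 a2 a3 a4 a5 a6 a7 :
  M^T *m M = s%:M -> M *m M^T = s%:M -> 0 < s ->
  forall S W, model a1 a2 a3 a4 a5 a6 a7 (M *m S *m M^T) (M *m W *m M^T)
     = M *m model a1 a2 a3 a4 a5 a6 a7 S W *m M^T.
Proof. by move=> H1 H2 H3 S W; rewrite (model_equiv H1 H2 H3). Qed.

Lemma inv_SO3 (nu rho : R) a1 a2 a3 a4 a5 a6 a7 :
  invariant_SO3 nu rho (model a1 a2 a3 a4 a5 a6 a7).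
Proof.
move=> Q HQ _.
have HQ' : Q^T *m Q = (1 : R)%:M by apply: mulmx1C.
apply: (@preserves_ext _ _ _ _ (actM Q 1)).
  move=> u p; rewrite /act_rot /actM.
  by f_equal; apply: funext => t; apply: funext => x; rewrite !mul1r.
apply: preserves_M => //.
apply: model_equiv_gen; [exact: HQ' | exact: HQ | exact: ltr01].
Qed.

Lemma inv_Gs (nu rho : R) a1 a2 a3 a4 a5 a6 a7 :
  invariant_Gs nu rho (model a1 a2 a3 a4 a5 a6 a7).
Proof.
move=> eps.
set c := expR (- eps).
have c2E : expR (- (2%:R * eps)) = c * c by rewrite -mulrN expRM_natl expr2.
have HMM : (c%:M : mat)^T *m c%:M = (c * c)%:M by rewrite tr_scalar_mx -scalar_mxM.
have HMM' : (c%:M : mat) *m (c%:M)^T = (c * c)%:M by rewrite tr_scalar_mx -scalar_mxM.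
apply: (@preserves_ext _ _ _ _ (actM c%:M (c * c))).
  move=> u p; rewrite /act_scal /actM c2E.
  f_equal; apply: funext => t; apply: funext => x;
  by rewrite tr_scalar_mx !mul_scalar_mx.
apply: preserves_M => //.
apply: model_equiv_gen; [exact: HMM | exact: HMM' | by rewrite mulr_gt0 // expR_gt0].
Qed.

Lemma inv_Gt (nu rho : R) tau : invariant_Gt nu rho tau.
Proof.
move=> eps u p [H1 [H2 [H3 [H4 [H5 H6]]]]]; rewrite /act_time /=.
refine (conj _ (conj _ (conj _ (conj _ (conj _ _))))).
- move=> t x.
  have dL : differentiable (fun z : R * vec => (z.1 - eps, z.2)) (t, x).
    apply: differentiable_pair; last exact: diff_snd.
    exact: (diff_addf (diff_fst _) (differentiable_cst _ _)).
  exact: (differentiable_comp dL (H1 (t - eps) x)).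
- by move=> t x i j; apply: H2.
- by move=> t x; apply: H3.
- by move=> t x i j; apply: H4.
- by move=> t x; apply: H5.
- move=> t x i.
  rewrite (@derive_aff _ _ _ _ (fun r => u r x i 0) (fun r => r - eps) t 1 (t - eps) 1); last first.
    by move=> h; rewrite addrA.
  exact: H6.
Qed.

Lemma inv_Gp (nu rho : R) tau : invariant_Gp nu rho tau.
Proof.
move=> xi _ u p [H1 [H2 [H3 [H4 [H5 H6]]]]]; rewrite /act_press /=.
refine (conj _ (conj _ (conj _ (conj _ (conj _ _))))) => //.
- by move=> t x; apply: (diff_addf (H3 t x) (differentiable_cst _ _)).
- by move=> t x i; rewrite derive_addc; apply: H6.
Qed.
End Main.

Section Gal.
Variable R : realType.
Notation vec := 'cV[R]_3.
Notation mat := 'M[R]_3.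

Lemma derive_sub (W : normedModType R) (f : vec -> W) (c x v : vec) :
  'D_v (fun y => f (y - c)) x = 'D_v f (x - c).
Proof.
by apply: (@derive_aff _ _ _ _ f (fun y => y - c)) => h; rewrite addrA.
Qed.

Lemma diff_sub (W : normedModType R) (f : vec -> W) (c x : vec) :
  differentiable f (x - c) -> differentiable (fun y => f (y - c)) x.
Proof.
move=> df; have dg : differentiable (fun y : vec => y - c) x.
  by apply: differentiableB; [exact: diff_id | exact: differentiable_cst].
exact: (differentiable_comp dg df).
Qed.

Lemma derive_coord (v x : vec) k : 'D_v (fun z : vec => z k 0) x = v k 0.
Proof.
have E : 'D_v (fun z : vec => z) x = \matrix_(i, j) 'D_v (fun t : vec => t i j) x.
  by apply: derive_mx; exact: derivable_id.
move/(congr1 (fun A : vec => A k 0)): E; rewrite mxE => <-.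
by rewrite derive_id.
Qed.

Lemma derive_addf (V : normedModType R) (f g : V -> R) x v :
  differentiable f x -> differentiable g x ->
  'D_v (fun y => f y + g y) x = 'D_v f x + 'D_v g x.
Proof.
move=> df dg; have -> : (fun y => f y + g y) = f + g by [].
by rewrite deriveD //; apply: diff_derivable.
Qed.

Lemma derive_subf (V : normedModType R) (f g : V -> R) x v :
  differentiable f x -> differentiable g x ->
  'D_v (fun y => f y - g y) x = 'D_v f x - 'D_v g x.
Proof.
move=> df dg; have -> : (fun y => f y - g y) = f - g by [].
by rewrite deriveB //; apply: diff_derivable.
Qed.

Lemma derive_csubv (f : R -> vec) (c : vec) x v :
  differentiable f x -> 'D_v (fun y => c - f y) x = - 'D_v f x.
Proof.
move=> df; have -> : (fun y => c - f y) = cst c - f by [].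
rewrite deriveB; first by rewrite derive_cst sub0r.
  exact: derivable_cst.
exact: diff_derivable.
Qed.

Lemma derive_idR (t : R) : 'D_1 (fun r : R => r) t = 1.
Proof. exact: derive_id. Qed.

Lemma pairB (a c : R) (b d : vec) : ((a, b) : R * vec) - (c, d) = (a - c, b - d).
Proof. by []. Qed.


Lemma inv_Gal (nu rho : R) tau : rho != 0 -> invariant_Gal nu rho tau.
Proof.
move=> rho0 alpha [dA [dA1 _]] u p [H1 [H2 [H3 [H4 [H5 H6]]]]]; rewrite /act_gal /=.
set a1 := derive1 alpha.
have da t : differentiable alpha t by apply: (proj1 (derivable1_diffP alpha t)); apply: dA.
have da1 t : differentiable a1 t by apply: (proj1 (derivable1_diffP a1 t)); apply: dA1.
set u' := fun t x => u t (x - alpha t) + a1 t.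
have u'E t y k : u' t y k 0 = u t (y - alpha t) k 0 + a1 t k 0 by rewrite /u' mxE.
have u'F t k : (fun y => u' t y k 0) = (fun y => u t (y - alpha t) k 0 + a1 t k 0).
  by apply: funext => y; rewrite u'E.
have du' t x k : differentiable (fun y => u' t y k 0) x.
  rewrite u'F; apply: diff_addf; last exact: differentiable_cst.
  have := @diff_sub _ (fun z => u t z k 0) (alpha t) x (diff_uxi H1 _ _ _). move=> HH. exact: HH.
have Du' t x k j : 'D_(evec R j) (fun y => u' t y k 0) x = 'D_(evec R j) (fun y => u t y k 0) (x - alpha t).
  by rewrite u'F derive_addc (derive_sub (fun z => u t z k 0)).
have gradE t x : gradu u' t x = gradu u t (x - alpha t).
  by apply/matrixP => i j; rewrite !mxE Du'.
have SE t x : Sof u' t x = Sof u t (x - alpha t) by rewrite /Sof gradE.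
have OE t x : Omof u' t x = Omof u t (x - alpha t) by rewrite /Omof gradE.
refine (conj _ (conj _ (conj _ (conj _ (conj _ _))))).
- move=> t x.
  have dL : differentiable (fun z : R * vec => (z.1, z.2 - alpha z.1)) (t, x).
    apply: differentiable_pair; first exact: diff_fst.
    apply: differentiableB; first exact: diff_snd.
    exact: (differentiable_comp (diff_fst (t, x)) (da t)).
  have dG := differentiable_comp dL (H1 t (x - alpha t)).
  have dA1' := differentiable_comp (diff_fst (t, x)) (da1 t).
  exact: (differentiableD dG dA1').
- move=> t x i j.
  rewrite (_ : (fun y => gradu u' t y i j) = (fun y => gradu u t (y - alpha t) i j)); last first.
    by apply: funext => y; rewrite gradE.
  exact: (@diff_sub _ (fun z => gradu u t z i j) (alpha t) x (H2 _ _ i j)).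
- move=> t x.
  apply: differentiableB; first exact: (@diff_sub _ (p t) (alpha t) x (H3 _ _)).
  apply: diff_cmul; rewrite /dotv; apply: diff_sumf => k; apply: diff_cmul.
  exact: (@diff_sub _ (fun z : vec => z k 0) (alpha t) x (differentiable_coord _ k 0)).
- move=> t x i j.
  rewrite (_ : (fun y => tau (Sof u' t y) (Omof u' t y) i j) = (fun y => tau (Sof u t (y - alpha t)) (Omof u t (y - alpha t)) i j)); last first.
    by apply: funext => y; rewrite SE OE.
  exact: (@diff_sub _ (fun z => tau (Sof u t z) (Omof u t z) i j) (alpha t) x (H4 _ _ i j)).
- by move=> t x; rewrite gradE H5.
- move=> t x i.
  set y0 := x - alpha t.
  set b := a1 t.
  have ET : 'D_1 (fun r => u' r x i 0) t = 'D_1 (fun r => u r y0 i 0) t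
       - \sum_j b j 0 * 'D_(evec R j) (fun y => u t y i 0) y0 + derive1 a1 t i 0.
    rewrite (_ : (fun r => u' r x i 0) = (fun r => u r (x - alpha r) i 0 + a1 r i 0)); last first.
      by apply: funext => r; rewrite u'E.
    pose F := fun z : R * vec => u z.1 z.2 i 0.
    pose g := fun r : R => (r, x - alpha r).
    have dF : differentiable F (g t) := differentiable_comp (H1 t y0) (differentiable_coord _ i 0).
    have dg : differentiable g t.
      apply: differentiable_pair; first exact: diff_id.
      by apply: differentiableB; [exact: differentiable_cst | exact: da].
    have dFr : differentiable (fun r => a1 r i 0) t := differentiable_comp (da1 t) (differentiable_coord _ i 0).
    rewrite (@derive_addf _ (fun r => F (g r)) (fun r => a1 r i 0) t 1 (differentiable_comp dg dF) dFr).
    rewrite (@derive_comp _ _ _ _ F g t 1 dg dF).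
    have Dg : 'D_1 g t = ((1 : R), - b).
      rewrite deriveE // diff_pair; first last.
      - by apply: differentiableB; [exact: differentiable_cst | exact: da].
      - exact: diff_id.
      rewrite -deriveE; last exact: diff_id.
      rewrite -deriveE; last by apply: differentiableB; [exact: differentiable_cst | exact: da].
      rewrite derive_csubv; last exact: da.
      rewrite derive_idR.
      by rewrite /b /a1 derive1E.
    rewrite Dg deriveE //.
    have -> : ((1 : R), - b) = ((1 : R), (0 : vec)) - ((0 : R), b) by rewrite pairB subr0 sub0r.
    rewrite linearB -deriveE // -deriveE // -derive_t -derive_x.
    rewrite (@derive_expand _ (fun y' => F (t, y')) (x - alpha t) b); last exact: (diff_uxi H1 t y0 i).
    rewrite derive1E (derive_mx (dA1 t)) mxE.
    by [].
  have tr0 : \sum_j 'D_(evec R j) (fun y => u t y j 0) y0 = 0.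
    by have := H5 t y0; rewrite /mxtrace; under eq_bigr do rewrite mxE.
  have EC : \sum_j 'D_(evec R j) (fun y => u' t y i 0 * u' t y j 0) x
      = \sum_j 'D_(evec R j) (fun y => u t y i 0 * u t y j 0) y0
        + \sum_j b j 0 * 'D_(evec R j) (fun y => u t y i 0) y0.
    rewrite (eq_bigr (fun j => 'D_(evec R j) (fun y => u t y i 0 * u t y j 0) y0
        + b i 0 * 'D_(evec R j) (fun y => u t y j 0) y0
        + b j 0 * 'D_(evec R j) (fun y => u t y i 0) y0)); last first.
      move=> j _; rewrite derive_mulf // !Du' !u'E.
      rewrite derive_mulf; [|exact: diff_uxi|exact: diff_uxi].
      rewrite /y0 /b; ring.
    by rewrite !big_split /= -mulr_sumr tr0 mulr0 addr0.
  have EP : 'D_(evec R i) (fun y => p t (y - alpha t) - rho * dotv (derive1 a1 t) (y - alpha t)) x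
      = 'D_(evec R i) (p t) y0 - rho * derive1 a1 t i 0.
    have dd : differentiable (fun y => dotv (derive1 a1 t) (y - alpha t)) x.
      rewrite /dotv; apply: diff_sumf => k; apply: diff_cmul.
      exact: (@diff_sub _ (fun z : vec => z k 0) (alpha t) x (differentiable_coord _ k 0)).
    rewrite derive_subf; first last.
    - exact: diff_cmul.
    - exact: (@diff_sub _ (p t) (alpha t) x (H3 _ _)).
    rewrite derive_sub derive_cmul //; congr (_ - rho * _).
    rewrite /dotv derive_sumf; last first.
      move=> k; apply: diff_cmul.
      exact: (@diff_sub _ (fun z : vec => z k 0) (alpha t) x (differentiable_coord _ k 0)).
    rewrite (bigD1 i) //= big1 ?addr0.
      by rewrite derive_cmul ?(derive_sub (fun z : vec => z i 0)) ?derive_coord ?mxE ?eqxx ?mulr1 //;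
         exact: (@diff_sub _ (fun z : vec => z i 0) (alpha t) x (differentiable_coord _ i 0)).
    move=> k nki; rewrite derive_cmul; last first.
      exact: (@diff_sub _ (fun z : vec => z k 0) (alpha t) x (differentiable_coord _ k 0)).
    by rewrite (derive_sub (fun z : vec => z k 0)) derive_coord mxE (negbTE nki) mulr0.
  have EV : \sum_j 'D_(evec R j) (fun y => Sof u' t y i j) x
      = \sum_j 'D_(evec R j) (fun y => Sof u t y i j) y0.
    apply: eq_bigr => j _.
    rewrite (_ : (fun y => Sof u' t y i j) = (fun y => Sof u t (y - alpha t) i j)); last first.
      by apply: funext => y; rewrite SE.
    rewrite /y0; exact: (@derive_sub _ (fun z => Sof u t z i j) (alpha t) x (evec R j)).
  have EX : \sum_j 'D_(evec R j) (fun y => tau (Sof u' t y) (Omof u' t y) i j) x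
      = \sum_j 'D_(evec R j) (fun y => tau (Sof u t y) (Omof u t y) i j) y0.
    apply: eq_bigr => j _.
    rewrite (_ : (fun y => tau (Sof u' t y) (Omof u' t y) i j) = (fun y => tau (Sof u t (y - alpha t)) (Omof u t (y - alpha t)) i j)); last first.
      by apply: funext => y; rewrite SE OE.
    rewrite /y0; exact: (@derive_sub _ (fun z => tau (Sof u t z) (Omof u t z) i j) (alpha t) x (evec R j)).
  rewrite ET EC EP EV EX -[RHS](H6 t y0 i).
  rewrite mulrBr mulrA (mulVf rho0) mul1r.
  ring.
Qed.
End Gal.


Theorem theorem2 (R : realType) (nu rho : R) (hnu : 0 < nu) (hrho : 0 < rho)
  (a1 a2 a3 a4 a5 a6 a7 : R -> R -> R -> R -> R -> R) :
  let tau := model a1 a2 a3 a4 a5 a6 a7 in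
  [/\ invariant_Gt nu rho tau, invariant_Gal nu rho tau,
      invariant_SO3 nu rho tau, invariant_Gp nu rho tau
    & invariant_Gs nu rho tau].
Proof.
move=> tau; split.
- exact: inv_Gt.
- by apply: inv_Gal; rewrite gt_eqF.
- exact: inv_SO3.
- exact: inv_Gp.
- exact: inv_Gs.
Qed.
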